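(* Let $S_1,\ldots,S_m$ be formulas ($m\ge1$). The doxastic states $\emptyset[S_1,S_2,\ldots,S_m]$ and $\emptyset[S_2,\ldots,S_m]$ coincide if and only if $S_1$ is equivalent to the disjunction of some (possibly none) Q-combinations of $S_2,\ldots,S_m$.
   Context: Propositional models are truth assignments over a finite set of variables; a formula used where a set of models is expected stands for its set of models. A doxastic state is a sequence $[C(0),\ldots,C(k)]$ of nonempty, pairwise disjoint sets of models covering all models; two doxastic states coincide when they are equal. The flat doxastic state $\emptyset$ is $[\text{all models}]$. Lexicographic revision: $C\,\mathrm{lex}(A) = [C(0)\cap A,\ldots,C(k)\cap A, C(0)\setminus A,\ldots,C(k)\setminus A]$, empty sets discarded. $\emptyset[S_1,\ldots,S_m]$ denotes $\emptyset$ revised lexicographically by $S_1$, then $S_2$, ..., then $S_m$. A Q-combination of formulas $T_1,\ldots,T_n$ is a formula $(B_1\equiv T_1)\wedge\cdots\wedge(B_n\equiv T_n)$ with each $B_i\in\{\mathsf{true},\mathsf{false}\}$. The empty disjunction is $\mathsf{false}$. *)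

(* Defs.v *)
From mathcomp Require Import all_boot.
Set Implicit Arguments. Unset Strict Implicit. Unset Printing Implicit Defensive.

Definition model (n : nat) := {ffun 'I_n -> bool}.

Inductive form (n : nat) : Type :=
| FVar of 'I_n
| FTrue | FFalse
| FNot of form n
| FAnd of form n & form n
| FOr of form n & form n
| FEquiv of form n & form n.

Arguments FTrue {n}. Arguments FFalse {n}.

Fixpoint sat n (v : model n) (f : form n) : bool :=
  match f with
  | FVar i => v i
  | FTrue => true
  | FFalse => false
  | FNot g => ~~ sat v g
  | FAnd g h => sat v g && sat v h
  | FOr g h => sat v g || sat v h
  | FEquiv g h => sat v g == sat v h
  end.

Definition mods n (f : form n) : {set model n} := [set v | sat v f].

Definition fequiv n (f g : form n) : Prop := mods f = mods g.

(* Doxastic states: sequences of sets of models (partition, most plausible first). *)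
Definition doxstate n := seq {set model n}.

Definition flat n : doxstate n := [:: [set: model n]].

Definition lex n (C : doxstate n) (A : {set model n}) : doxstate n :=
  [seq X <- [seq Y :&: A | Y <- C] ++ [seq Y :\: A | Y <- C] | X != set0].

(* emptyset[S_1,...,S_m]: flat state revised by S_1, then S_2, ..., then S_m. *)
Definition revise_seq n (S : seq (form n)) : doxstate n :=
  foldl (fun C f => lex C (mods f)) (flat n) S.

(* Q-combination (B_1 == T_1) /\ ... /\ (B_k == T_k), B_i in {true,false}
   (empty conjunction = true). *)
Definition bconst n (b : bool) : form n := if b then FTrue else FFalse.

Definition qcomb n (B : seq bool) (T : seq (form n)) : form n :=
  foldr (fun p acc => FAnd (FEquiv (bconst n p.1) p.2) acc) FTrue (zip B T).

Definition bigor n (l : seq (form n)) : form n := foldr (@FOr n) FFalse l.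

(* Main.v *)
Require Import Defs.
From mathcomp Require Import all_boot.
Set Implicit Arguments. Unset Strict Implicit. Unset Printing Implicit Defensive.

Section S.
Variable n : nat.
Implicit Types (C : doxstate n) (X Y A : {set model n}) (f : form n) (Ss : seq (form n)).

Definition nz X := X != set0.
Definition step C f : doxstate n :=
  [seq Y :&: mods f | Y <- C] ++ [seq Y :\: mods f | Y <- C].
Definition G C Ss := foldl step C Ss.
Definition sigv (v : model n) Ss := [seq sat v f | f <- Ss].

Lemma filter_map_nz (g : {set model n} -> {set model n}) C :
  g set0 = set0 -> filter nz (map g (filter nz C)) = filter nz (map g C).
Proof.
move=> Hg; elim: C => //= Y C IH.
case: (boolP (nz Y)) => HY /=; rewrite IH //.
by move: HY; rewrite /nz negbK => /eqP ->; rewrite Hg /= eqxx.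
Qed.

Lemma lex_filter C f : lex (filter nz C) (mods f) = filter nz (step C f).
Proof.
rewrite /lex /step -/nz !filter_cat !filter_map_nz //; [exact: set0D|exact: set0I].
Qed.

Lemma revise_G C Ss :
  foldl (fun C f => lex C (mods f)) (filter nz C) Ss = filter nz (G C Ss).
Proof. by elim: Ss C => //= f Ss IH C; rewrite lex_filter IH. Qed.

Lemma flatE : flat n = filter nz [:: setT].
Proof.
have H : [set: model n] != set0.
  by apply/set0Pn; exists [ffun _ => true]; rewrite inE.
by rewrite /= /nz H.
Qed.

Definition fl A L := flatten [seq [seq Y :&: X | Y <- [:: setT :&: A; setT :\: A]] | X <- L].

Lemma G_flatten C Ss :
  G C Ss = flatten [seq [seq Y :&: X | Y <- C] | X <- G [:: setT] Ss].
Proof.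
elim: Ss C => [|f Ss IH] C.
  by rewrite /= cats0; elim: C => //= Y C IH; rewrite setIT -IH.
rewrite /= IH (IH (step [:: setT] f)).
elim: (G [:: setT] Ss) => //= X L IHL.
rewrite -IHL catA; congr (_ ++ _).
rewrite /step map_cat -!map_comp; congr (_ ++ _); apply: eq_map => Y /=.
  by rewrite setTI setIA.
by rewrite setTD !setDE setIA.
Qed.


Definition pa A X := setT :&: A :&: X.
Definition pb A X := (setT :\: A) :&: X.

Lemma fl_cons A X L : fl A (X :: L) = pa A X :: pb A X :: fl A L.
Proof. by []. Qed.

Lemma pa0 A X : pa A X = set0 -> pb A X = X.
Proof.
move/setP=> H; apply/setP=> v; move: (H v); rewrite /pa /pb !inE.
by case: (v \in A); case: (v \in X).
Qed.

Lemma pb0 A X : pb A X = set0 -> pa A X = X.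
Proof.
move/setP=> H; apply/setP=> v; move: (H v); rewrite /pa /pb !inE.
by case: (v \in A); case: (v \in X).
Qed.

Lemma head_eq A X s t : ~~ (nz (pa A X) && nz (pb A X)) ->
  filter nz s = filter nz t -> filter nz (pa A X :: pb A X :: s) = filter nz (X :: t).
Proof.
move=> H E; rewrite /= E; case: (eqVneq (pa A X) set0) => Ha.
  have Hn : nz (pa A X) = false by rewrite /nz Ha eqxx.
  by rewrite Hn (pa0 Ha).
have Hb : pb A X = set0 by apply/eqP; move: H; rewrite /nz Ha /= negbK.
have Hn : nz (pb A X) = false by rewrite /nz Hb eqxx.
by rewrite Hn (pb0 Hb); case: (nz X).
Qed.

Lemma nzX A X : nz X <= nz (pa A X) + nz (pb A X).
Proof.
case: (eqVneq (pa A X) set0) => Ha.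
  have Hn : nz (pa A X) = false by rewrite /nz Ha eqxx.
  by rewrite Hn (pa0 Ha) add0n.
rewrite {2}/nz Ha; apply: leq_trans (leq_b1 _) (leq_addr _ _).
Qed.

Lemma count_ge A L : count nz L <= count nz (fl A L).
Proof.
elim: L => //= X L IH; rewrite addnA; apply: leq_add => //; exact: nzX.
Qed.

Lemma count_gt A L X : X \in L -> nz (pa A X) && nz (pb A X) ->
  count nz L < count nz (fl A L).
Proof.
elim: L => //= Y L IH; rewrite inE => /orP [/eqP <- | HX] H.
  case/andP: H => -> ->; rewrite addnA -addSn; apply: leq_add (count_ge _ _).
  by case: (nz X).
rewrite addnA -addnS; exact: leq_add (nzX _ _) (IH HX H).
Qed.

Lemma split_iff A L : filter nz (fl A L) = filter nz L <->
  (forall X, X \in L -> ~~ (nz (pa A X) && nz (pb A X))).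
Proof.
split.
  move=> E X HX; apply/negP => H; move: (count_gt HX H).
  by rewrite -!size_filter E ltnn.
elim: L => [|X L IH] H //; rewrite fl_cons; apply: head_eq.
  by apply: H; rewrite inE eqxx.
by apply: IH => Y HY; apply: H; rewrite inE HY orbT.
Qed.

Lemma G_atom C Ss X : X \in G C Ss ->
  exists Y B, Y \in C /\ X = Y :&: [set v | sigv v Ss == B].
Proof.
elim: Ss C => [|f Ss IH] C /= HX.
  exists X, [::]; split => //; apply/setP => v; rewrite !inE /sigv /= ?eqxx andbT //.
have [Y' [B' [HY' ->]]] := IH _ HX.
move: HY'; rewrite /step mem_cat => /orP [] /mapP [Y HY ->].
  exists Y, (true :: B'); split=> //; apply/setP => v; rewrite /mods !inE /sigv /= eqseq_cons.
  by case: (v \in Y); case: (sat v f); rewrite /= ?andbT ?andbF.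
exists Y, (false :: B'); split=> //; apply/setP => v; rewrite /mods !inE /sigv /= eqseq_cons.
by case: (v \in Y); case: (sat v f); rewrite /= ?andbT ?andbF.
Qed.

Lemma G_cover C Ss Y (v : model n) : Y \in C -> v \in Y -> exists2 X, X \in G C Ss & v \in X.
Proof.
elim: Ss C Y => [|f Ss IH] C Y HY Hv /=; first by exists Y.
case: (boolP (sat v f)) => Hf.
  apply: (IH _ (Y :&: mods f)); first by rewrite /step mem_cat (map_f (fun Z => Z :&: mods f) HY).
  by rewrite /mods !inE Hv Hf.
apply: (IH _ (Y :\: mods f)); first by rewrite /step mem_cat (map_f (fun Z => Z :\: mods f) HY) orbT.
by rewrite /mods !inE Hv Hf.
Qed.

Lemma size_sigv (v : model n) Ss : size (sigv v Ss) = size Ss.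
Proof. exact: size_map. Qed.

Lemma qcomb_sat (v : model n) (B : seq bool) Ss : size B = size Ss -> sat v (qcomb B Ss) = (sigv v Ss == B).
Proof.
elim: Ss B => [|f Ss IH] [|b B] //= E.
rewrite IH; last by case: E.
rewrite /sigv /= eqseq_cons; by case: b; case: (sat v f).
Qed.

Lemma bigor_sat (v : model n) (l : seq (form n)) : sat v (bigor l) = has (sat v) l.
Proof. by elim: l => //= f l ->. Qed.

End S.

Theorem mainTheorem7 (n : nat) (S1 : form n) (Ss : seq (form n)) :
  revise_seq (S1 :: Ss) = revise_seq Ss <->
  exists Bs : seq (seq bool),
    all (fun B => size B == size Ss) Bs /\
    fequiv S1 (bigor [seq qcomb B Ss | B <- Bs]).
Proof.
have E1 : revise_seq (S1 :: Ss) = filter (@nz n) (fl (mods S1) (G [:: setT] Ss)).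
  have -> : revise_seq (S1 :: Ss) = foldl (fun C f => lex C (mods f))
      (lex (filter (@nz n) [:: setT]) (mods S1)) Ss by rewrite -flatE.
  by rewrite lex_filter revise_G G_flatten.
have E2 : revise_seq Ss = filter (@nz n) (G [:: setT] Ss).
  by rewrite /revise_seq flatE revise_G.
rewrite E1 E2; apply: (iff_trans (split_iff _ _)).
have HP : (forall X, X \in G [:: setT] Ss -> ~~ (nz (pa (mods S1) X) && nz (pb (mods S1) X)))
  <-> (forall v w : model n, sigv v Ss = sigv w Ss -> sat v S1 -> sat w S1).
  split.
    move=> H v w Evw Hv; apply/negPn/negP => Hw.
    have [X HX HvX] := @G_cover n [:: setT] Ss setT v (mem_head _ _) (in_setT v).
    have [Y [B [HY EX]]] := G_atom HX.
    move: HY; rewrite mem_seq1 => /eqP EY; subst Y.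
    move: HvX; rewrite EX !inE => /eqP HB.
    have HwX : w \in X by rewrite EX !inE -Evw HB eqxx.
    have HvX : v \in X by rewrite EX !inE HB eqxx.
    apply: (negP (H X HX)); apply/andP; split; apply/set0Pn; [exists v | exists w];
      by rewrite /pa /pb /mods !inE ?Hv ?Hw ?HvX ?HwX.
  move=> P X HX; have [Y [B [HY EX]]] := G_atom HX.
  apply/negP => /andP [/set0Pn [v Hv] /set0Pn [w Hw]].
  move: Hv Hw; rewrite /pa /pb EX /mods !inE.
  case Hv1: (sat v S1) => //; case Hw1: (sat w S1) => //=.
  case/andP => _ /eqP Bv /andP [_ /eqP Bw].
  by move: (P v w (etrans Bv (esym Bw)) Hv1); rewrite Hw1.
apply: (iff_trans HP); split.
  move=> P; exists [seq sigv v Ss | v <- enum (mods S1)]; split.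
    by apply/allP => B /mapP [v _ ->]; rewrite size_sigv.
  rewrite /fequiv; apply/setP => v; rewrite /mods !inE bigor_sat has_map.
  apply/idP/hasP.
    move=> Hv; exists (sigv v Ss).
      by apply: map_f; rewrite mem_enum inE.
    by rewrite /= qcomb_sat ?size_sigv.
  move=> [B /mapP [w Hw ->]] /=; rewrite qcomb_sat ?size_sigv // => /eqP Ew.
  by apply: (P w v (esym Ew)); move: Hw; rewrite mem_enum inE.
move=> [Bs [Hall Heq]] v w Evw Hv.
have : v \in mods S1 by rewrite /mods inE.
rewrite Heq /mods inE bigor_sat has_map => /hasP [B HB] /=.
have HsB : size B = size Ss by move/allP: Hall => /(_ B HB) /eqP.
rewrite qcomb_sat // => /eqP Ev.
suff : w \in mods S1 by rewrite /mods inE.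
rewrite Heq /mods inE bigor_sat has_map; apply/hasP; exists B => //=.
by rewrite qcomb_sat // -Evw Ev eqxx.
Qed.
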